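(* Let $D\ge2$, let $C_1,\dots,C_D\subseteq\mathbb{F}_q^n$ be linear codes and let $C_1'\subseteq C_1$ be a linear subcode. Then $$\rho(C_1',C_2,\dots,C_D)\ge\frac{\rho(C_1,C_2,\dots,C_D)}{1+\rho(C_2,\dots,C_D)^{-1}}.$$
   Context: $\mathbb{F}_q$ is a finite field of characteristic 2. For a finite set $S$, $\mathbb{F}_q^S$ is the space of vectors indexed by $S$; $|v|$ is the Hamming weight and $\|v\|=|v|/|S|$. For a collection of $E$ linear codes $\mathcal{A}_1,\dots,\mathcal{A}_E\subseteq\mathbb{F}_q^n$: $\mathcal{L}_i$ is the set of lines in $[n]^E$ parallel to the $i$-th axis (sets $A_1\times\cdots\times A_E$ with $A_i=[n]$, $|A_j|=1$ for $j\ne i$); $\mathcal{A}^{(i)}=\{c\in\mathbb{F}_q^{[n]^E}:c|_\ell\in\mathcal{A}_i\ \forall\ell\in\mathcal{L}_i\}$; $\mathcal{A}_1\boxplus\cdots\boxplus\mathcal{A}_E=\sum_i\mathcal{A}^{(i)}$; for $x\in\mathbb{F}_q^{[n]^E}$, $|x|_i$ is the number of $\ell\in\mathcal{L}_i$ with $x|_\ell\ne0$ and $\|x\|_i=|x|_i/n^{E-1}$. The collection is $\rho$-product-expanding if every $c\in\mathcal{A}_1\boxplus\cdots\boxplus\mathcal{A}_E$ can be written $c=\sum_ia_i$, $a_i\in\mathcal{A}^{(i)}$, with $\rho\sum_i\|a_i\|_i\le\|c\|$; $\rho(\mathcal{A}_1,\dots,\mathcal{A}_E)$ is the maximal such $\rho$.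 *)

(* Defs.v *)
From HB Require Import structures.
From mathcomp Require Import all_boot all_order all_algebra all_field.
From mathcomp Require Import boolp classical_sets reals constructive_ereal ereal.
Set Implicit Arguments. Unset Strict Implicit. Unset Printing Implicit Defensive.
Import Order.TTheory GRing.Theory Num.Theory.
Local Open Scope ring_scope.

Section ProductExpansion.
Variables (F : finFieldType) (R : realType) (n E : nat).

Definition idx := {ffun 'I_E -> 'I_n}.
Definition word := {ffun idx -> F}.

Definition upd (p : idx) (i : 'I_E) (j : 'I_n) : idx :=
  [ffun k => if k == i then j else p k].

Definition lines (i : 'I_E) : {set {set idx}} :=
  [set [set upd p i j | j : 'I_n] | p : idx].

Definition restr (c : word) (i : 'I_E) (p : idx) : 'rV[F]_n :=
  \row_j c (upd p i j).

Definition in_dir (A : 'I_E -> {vspace 'rV[F]_n}) (i : 'I_E) (c : word) : Prop :=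
  forall p : idx, restr c i p \in A i.

Definition in_boxsum (A : 'I_E -> {vspace 'rV[F]_n}) (c : word) : Prop :=
  exists a : 'I_E -> word, (forall i, in_dir A i (a i)) /\ c = \sum_i a i.

Definition rnorm (c : word) : R := (#|[set p | c p != 0]|)%:R / (n ^ E)%:R.

Definition dnorm (i : 'I_E) (x : word) : R :=
  (#|[set l in lines i | [exists y in l, x y != 0]]|)%:R / (n ^ E.-1)%:R.

Definition prod_expanding (rho : R) (A : 'I_E -> {vspace 'rV[F]_n}) : Prop :=
  forall c, in_boxsum A c ->
    exists a : 'I_E -> word,
      [/\ forall i, in_dir A i (a i), c = \sum_i a i &
          rho * (\sum_i dnorm i (a i)) <= rnorm c].

(* rho(A_1,...,A_E): the maximal rho with A rho-product-expanding
   (as an extended real: +oo when every rho works, i.e. all codes are 0). *)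
Definition rho_pe (A : 'I_E -> {vspace 'rV[F]_n}) : \bar R :=
  ereal_sup [set r%:E | r in [set r : R | prod_expanding r A]].

End ProductExpansion.

Lemma tail_lt (D : nat) (i : 'I_D.-1) : (i.+1 < D)%N.
Proof. by case: D i => [|D] [i hi]. Qed.

Definition tail_codes (F : finFieldType) (n D : nat) (C : 'I_D -> {vspace 'rV[F]_n})
  : 'I_D.-1 -> {vspace 'rV[F]_n} := fun i => C (Ordinal (tail_lt i)).

Definition replace_first (F : finFieldType) (n D : nat) (C : 'I_D -> {vspace 'rV[F]_n})
  (C1' : {vspace 'rV[F]_n}) : 'I_D -> {vspace 'rV[F]_n} :=
  fun i => if val i == 0 then C1' else C i.

(* Main.v *)
Require Import Defs.
From HB Require Import structures.
From mathcomp Require Import all_boot all_order all_algebra all_field.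
From mathcomp Require Import boolp classical_sets reals constructive_ereal ereal.
From mathcomp Require Import ring lra.
Import Order.TTheory GRing.Theory Num.Theory.
Local Open Scope ring_scope.

Module Helpers.
Set Implicit Arguments. Unset Strict Implicit. Unset Printing Implicit Defensive.

Lemma card_sum (T : finType) (P : pred T) : #|[set x | P x]| = (\sum_x (P x : nat))%N.
Proof. rewrite -sum1_card big_mkcond /=; apply eq_bigr => x _; rewrite inE; by case: (P x). Qed.

Section Gen.
Variables (F : finFieldType) (n E : nat).
Implicit Types (p q : idx n E) (x y : word F n E).

Lemma upd_id p i : upd p i (p i) = p.
Proof. by apply/ffunP => k; rewrite ffunE; case: eqP => // ->. Qed.
Lemma upd_upd p i j k : upd (upd p i j) i k = upd p i k.
Proof. by apply/ffunP => l; rewrite !ffunE; case: eqP. Qed.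
Lemma upd_at p i j : upd p i j i = j.
Proof. by rewrite ffunE eqxx. Qed.
Lemma upd_comm p i i' j k : i != i' -> upd (upd p i j) i' k = upd (upd p i' k) i j.
Proof.
move=> ne; apply/ffunP => l; rewrite !ffunE.
case: (eqVneq l i') => [->|]; first by rewrite eq_sym (negbTE ne).
by case: (eqVneq l i).
Qed.
Lemma restr_upd x i p j : restr x i (upd p i j) = restr x i p.
Proof. by apply/rowP => k; rewrite !mxE upd_upd. Qed.
Lemma restrD x y i p : restr (x + y) i p = restr x i p + restr y i p.
Proof. by apply/rowP => k; rewrite !mxE ffunE. Qed.
Lemma restrN x i p : restr (- x) i p = - restr x i p.
Proof. by apply/rowP => k; rewrite !mxE ffunE. Qed.
Lemma restrB x y i p : restr (x - y) i p = restr x i p - restr y i p.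
Proof. by rewrite restrD restrN. Qed.
Lemma restr_sum (I : finType) (G : I -> word F n E) i p :
  restr (\sum_k G k) i p = \sum_k restr (G k) i p.
Proof. by apply/rowP => k; rewrite !mxE sum_ffunE summxE; apply eq_bigr => l _; rewrite mxE. Qed.
Lemma restr0 i p : restr (0 : word F n E) i p = 0.
Proof. by apply/rowP => k; rewrite !mxE ffunE. Qed.

Lemma restr_neq0 x i p : (restr x i p != 0) = [exists j, x (upd p i j) != 0].
Proof.
apply/idP/existsP => [H|[j Hj]].
  apply/existsP; apply: contraR H => /existsPn H; apply/eqP/rowP => j.
  by rewrite !mxE; move/negPn/eqP: (H j).
by apply: contra Hj => /eqP /rowP /(_ j); rewrite !mxE => ->.
Qed.

Definition Ncnt i x : nat := #|[set p | restr x i p != 0]|.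
Definition scnt x : nat := #|[set p | x p != 0]|.

Definition Lin i p : {set idx n E} := [set upd p i j | j : 'I_n].

Lemma Lin_mem i p q : (q \in Lin i p) -> Lin i q = Lin i p.
Proof.
case/imsetP => j _ ->; apply/setP => y; apply/imsetP/imsetP => [[k _ ->]|[k _ ->]];
 exists k => //; by rewrite upd_upd.
Qed.
Lemma Lin_self i p : p \in Lin i p.
Proof. by apply/imsetP; exists (p i) => //; rewrite upd_id. Qed.
Lemma card_Lin i p : #|Lin i p| = n.
Proof.
rewrite card_imset ?card_ord // => j k /(congr1 (fun q => q i)); by rewrite !upd_at.
Qed.

Lemma lines_count i x :
  muln #|[set l in lines n i | [exists y in l, x y != 0]]| n = Ncnt i x.
Proof.
set S := [set l in lines n i | _].
have HS : forall l, l \in S -> exists p, l = Lin i p.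
  by move=> l; rewrite inE => /andP[/imsetP[p _ ->] _]; exists p.
have trS : finset.trivIset S.
  apply/finset.trivIsetP => A B /HS[p ->] /HS[q ->] ne.
  apply/pred0P => y /=; apply/negP => /andP[y1 y2]; move/negP: ne; apply.
  by rewrite -(Lin_mem y1) -(Lin_mem y2).
have -> : Ncnt i x = #|finset.cover S|.
  rewrite /Ncnt; apply: eq_card => p; rewrite inE /finset.cover restr_neq0.
  apply/existsP/finset.bigcupP => [[j Hj]|[l lS pl]].
    exists (Lin i p); last exact: Lin_self.
    rewrite inE; apply/andP; split; first by apply/imsetP; exists p.
    by apply/existsP; exists (upd p i j); rewrite Hj andbT; apply/imsetP; exists j.
  move: (lS); rewrite inE => /andP[_ /existsP[y /andP[yl yx]]].
  case: (HS l lS) => q lq; subst l.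
  rewrite -(Lin_mem pl) in yl.
  by case/imsetP: yl => j _ ey; exists j; rewrite -ey.
rewrite (@card_partition _ S (finset.cover S)); last first.
  apply/and3P; split => //; apply/negP => /HS[p] /setP /(_ p).
  by rewrite Lin_self inE.
rewrite -sum_nat_const; apply: eq_bigr => l /HS[p ->]; by rewrite card_Lin.
Qed.

Lemma E_pos (i : 'I_E) : (0 < E)%N.
Proof. by apply: leq_ltn_trans (ltn_ord i). Qed.

Lemma dnormE (R : realType) i x : dnorm R i x = (Ncnt i x)%:R / (n ^ E)%:R.
Proof.
rewrite /dnorm -lines_count.
have [n0|n0] := posnP n.
  suff -> : #|[set l in lines n i | [exists y in l, x y != 0]]| = 0%N by rewrite !mul0n !mul0r.
  apply/eqP; rewrite cards_eq0; apply/eqP/setP => l; rewrite !inE.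
  apply/negP => /andP[/imsetP[p _ _] _]; case: (p i) => m; by rewrite n0.
have hE : (n ^ E = n ^ E.-1 * n)%N by rewrite -expnSr prednK // (E_pos i).
rewrite hE !natrM; field.

by rewrite !pnatr_eq0 expn_eq0 -!lt0n n0 -[n == 0%N]negbK -lt0n n0.
Qed.

Lemma idx_empty (i : 'I_E) : n = 0%N -> forall A : {set idx n E}, #|A| = 0%N.
Proof.
move=> n0 A; apply/eqP; rewrite cards_eq0; apply/eqP/setP => p; rewrite inE.
have : False by case: (p i) => m; rewrite n0.
by [].
Qed.

Definition PN (R : realType) (r : R) (A : 'I_E -> {vspace 'rV[F]_n}) :=
  forall c, in_boxsum A c -> exists a : 'I_E -> word F n E,
      [/\ forall i, in_dir A i (a i), c = \sum_i a i &
          r * (\sum_i Ncnt i (a i))%:R <= (scnt c)%:R].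

Lemma PE (R : realType) (r : R) A : prod_expanding r A <-> PN r A.
Proof.
have key : forall a c, (r * (\sum_i dnorm R i (a i)) <= rnorm R c) =
                       (r * (\sum_i Ncnt i (a i))%:R <= (scnt c)%:R).
  move=> a c.
  have [n0|n0] := posnP n.
    case: (posnP E) => [E0|Epos].
      have e1 : \sum_i dnorm R i (a i) = 0.
        by apply: big1 => j _; exfalso; case: j => m; rewrite E0.
      have e2 : (\sum_i (Ncnt i (a i)) = 0)%N.
        by apply: big1 => j _; exfalso; case: j => m; rewrite E0.
      by rewrite e1 e2 !mulr0 /rnorm divr_ge0 ?ler0n.
    have i : 'I_E by exists 0%N.
    have hz : (n ^ E)%:R = 0 :> R by rewrite n0 exp0n.
    rewrite /rnorm /scnt (idx_empty i n0) !mul0r.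
    have -> : \sum_i dnorm R i (a i) = 0.
      by apply: big1 => j _; rewrite dnormE /Ncnt (idx_empty i n0) mul0r.
    have -> : (\sum_i Ncnt i (a i) = 0)%N.
      by apply: big1 => j _; rewrite /Ncnt (idx_empty i n0).
    by rewrite !mulr0.
  have K : 0 < (n ^ E)%:R :> R by rewrite ltr0n expn_gt0 n0.
  have -> : \sum_i dnorm R i (a i) = \sum_i (Ncnt i (a i))%:R / (n ^ E)%:R.
    by apply: eq_bigr => j _; rewrite dnormE.
  by rewrite /rnorm -mulr_suml mulrA ler_pM2r ?invr_gt0 // -natr_sum.
split=> H c /H [a [h1 h2 h3]]; exists a; split => //.
  by rewrite -key.
by rewrite key.
Qed.

Lemma restr_at x i p : x p = restr x i p 0 (p i).
Proof. by rewrite mxE upd_id. Qed.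

Lemma Ncnt_add i x y : (Ncnt i (x + y)%R <= Ncnt i x + Ncnt i y)%N.
Proof.
rewrite /Ncnt; set A := [set p | restr x i p != 0]; set B := [set p | restr y i p != 0].
apply: (@leq_trans #|A :|: B|); last by rewrite cardsU leq_subr.
apply: subset_leq_card; apply/fintype.subsetP => p; rewrite !inE restrD.
by case: (eqVneq (restr x i p) 0) => [->|//]; rewrite add0r.
Qed.

Lemma scnt_Ncnt i x : (scnt x <= Ncnt i x)%N.
Proof.
apply: subset_leq_card; apply/fintype.subsetP => p; rewrite !inE (restr_at x i p).
by apply: contra => /eqP ->; rewrite mxE.
Qed.

Lemma Ncnt_mono i x y : (forall p, restr x i p = 0 -> restr y i p = 0) ->
  (Ncnt i y <= Ncnt i x)%N.
Proof.
move=> H; apply: subset_leq_card; apply/fintype.subsetP => p; rewrite !inE.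
by apply: contra => /eqP /H ->.
Qed.
End Gen.

Section Split.
Variables (F : finFieldType) (n m : nat).
Local Notation idx0 := (idx n m.+1).
Local Notation idx1 := (idx n m).
Local Notation word0 := (word F n m.+1).
Local Notation word1 := (word F n m).

Definition glue (j : 'I_n) (q : idx1) : idx0 :=
  [ffun k => if unlift ord0 k is Some k' then q k' else j].
Definition tl (p : idx0) : idx1 := [ffun k => p (lift ord0 k)].

Lemma glue0 (j : 'I_n) (q : idx1) : glue j q ord0 = j.
Proof. by rewrite ffunE unlift_none. Qed.
Lemma glue_lift (j : 'I_n) (q : idx1) (k : 'I_m) : glue j q (lift ord0 k) = q k.
Proof. by rewrite ffunE liftK. Qed.
Lemma tl_glue (j : 'I_n) (q : idx1) : tl (glue j q) = q.
Proof. by apply/ffunP => k; rewrite ffunE glue_lift. Qed.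
Lemma glue_tl (p : idx0) : glue (p ord0) (tl p) = p.
Proof. by apply/ffunP => k; rewrite ffunE; case: unliftP => [k'|] ->; rewrite ?ffunE. Qed.
Lemma upd_glue_lift (j : 'I_n) (q : idx1) (i : 'I_m) (k : 'I_n) : upd (glue j q) (lift ord0 i) k = glue j (upd q i k).
Proof.
apply/ffunP => l; rewrite !ffunE; case: unliftP => [l'|] -> /=.
  by rewrite !ffunE (inj_eq (@lift_inj _ ord0)).
by [].
Qed.
Lemma upd_glue0 (j : 'I_n) (q : idx1) (k : 'I_n) : upd (glue j q) ord0 k = glue k q.
Proof.
apply/ffunP => l; rewrite !ffunE; case: unliftP => [l'|] -> /=.
  by [].
by [].
Qed.
Lemma tl_upd_lift (p : idx0) (i : 'I_m) (k : 'I_n) : tl (upd p (lift ord0 i) k) = upd (tl p) i k.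
Proof. by apply/ffunP => l; rewrite !ffunE (inj_eq (@lift_inj _ ord0)). Qed.
Lemma upd_lift_0 (p : idx0) (i : 'I_m) (k : 'I_n) : upd p (lift ord0 i) k ord0 = p ord0.
Proof. by rewrite ffunE. Qed.

Lemma card_split (P : pred idx0) :
  #|[set p | P p]| = (\sum_(j < n) #|[set q | P (glue j q)]|)%N.
Proof.
rewrite card_sum.
under [RHS]eq_bigr do rewrite card_sum.
rewrite pair_bigA /=.
rewrite (reindex (fun u : 'I_n * idx1 => glue u.1 u.2)) //=.
apply: onW_bij; exists (fun p : idx0 => (p ord0, tl p)) => [[j q]|p] /=.
  by rewrite glue0 tl_glue.
exact: glue_tl.
Qed.

Definition sl (j : 'I_n) (x : word0) : word1 := [ffun q => x (glue j q)].
Definition gw (d : 'I_n -> word1) : word0 := [ffun p : idx0 => d (p ord0) (tl p)].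

Lemma restr_sl j x i q : restr (sl j x) i q = restr x (lift ord0 i) (glue j q).
Proof. by apply/rowP => k; rewrite !mxE ffunE upd_glue_lift. Qed.

Lemma sl_sum (I : finType) j (G : I -> word0) : sl j (\sum_k G k) = \sum_k sl j (G k).
Proof. by apply/ffunP => q; rewrite ffunE !sum_ffunE; apply: eq_bigr => k _; rewrite ffunE. Qed.

Lemma restr_gw d i p : restr (gw d) (lift ord0 i) p = restr (d (p ord0)) i (tl p).
Proof. by apply/rowP => k; rewrite !mxE ffunE upd_lift_0 tl_upd_lift. Qed.

Lemma Ncnt_gw d i : Ncnt (lift ord0 i) (gw d) = (\sum_j Ncnt i (d j))%N.
Proof.
rewrite /Ncnt (card_split (fun p => restr (gw d) (lift ord0 i) p != 0)).
apply: eq_bigr => j _; apply: eq_card => q; rewrite !inE restr_gw glue0 tl_glue.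
by [].
Qed.

Lemma scnt_sl x : scnt x = (\sum_j scnt (sl j x))%N.
Proof.
rewrite /scnt (card_split (fun p => x p != 0)).
by apply: eq_bigr => j _; apply: eq_card => q; rewrite !inE ffunE.
Qed.

Definition Mop (A : 'M[F]_n) (x : word0) : word0 :=
  [ffun p : idx0 => \sum_k x (upd p ord0 k) * A k (p ord0)].

Lemma restr_Mop A x p : restr (Mop A x) ord0 p = restr x ord0 p *m A.
Proof.
apply/rowP => j; rewrite !mxE ffunE upd_at; apply: eq_bigr => k _.
by rewrite !mxE upd_upd.
Qed.

Lemma MopD A x y : Mop A (x + y) = Mop A x + Mop A y.
Proof.
apply/ffunP => p; rewrite !ffunE -big_split /=; apply: eq_bigr => k _.
by rewrite ffunE mulrDl.
Qed.
Lemma Mop0 A : Mop A 0 = 0.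
Proof. by apply/ffunP => p; rewrite !ffunE big1 // => k _; rewrite ffunE mul0r. Qed.
Lemma MopN A x : Mop A (- x) = - Mop A x.
Proof.
apply/ffunP => p; rewrite !ffunE -sumrN; apply: eq_bigr => k _.
by rewrite ffunE mulNr.
Qed.
Lemma Mop_sum A (I : finType) (G : I -> word0) : Mop A (\sum_k G k) = \sum_k Mop A (G k).
Proof. exact: (big_morph (Mop A) (MopD A) (Mop0 A)). Qed.

Lemma Mop_dir A (Cs : 'I_m.+1 -> {vspace 'rV[F]_n}) i x :
  in_dir Cs (lift ord0 i) x -> in_dir Cs (lift ord0 i) (Mop A x).
Proof.
move=> H p.
have -> : restr (Mop A x) (lift ord0 i) p =
          \sum_k A k (p ord0) *: restr x (lift ord0 i) (upd p ord0 k).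
  apply/rowP => j; rewrite !mxE ffunE summxE upd_lift_0; apply: eq_bigr => k _.
  rewrite !mxE mulrC; congr (_ * _); congr (x _).
  by rewrite upd_comm // eq_sym neq_lift.
by apply: memv_suml => k _; apply: memvZ; apply: H.
Qed.
End Split.


Section Core.
Variables (F : finFieldType) (n m : nat).

Lemma projA (U : {vspace 'rV[F]_n}) (v : 'rV[F]_n) :
  v *m (1%:M - lin1_mx (projv U)) = v - projv U v.
Proof. by rewrite mulmxBr mulmx1 mul_rV_lin1. Qed.

Lemma rf0 (C : 'I_m.+1 -> {vspace 'rV[F]_n}) C1' : replace_first C C1' ord0 = C1'.
Proof. by []. Qed.
Lemma rf_lift (C : 'I_m.+1 -> {vspace 'rV[F]_n}) C1' i :
  replace_first C C1' (lift ord0 i) = C (lift ord0 i).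
Proof. by rewrite /replace_first /=. Qed.
Lemma tail_lift (C : 'I_m.+1 -> {vspace 'rV[F]_n}) (i : 'I_m) :
  tail_codes C i = C (lift ord0 i).
Proof. by rewrite /tail_codes; congr (C _); apply: val_inj. Qed.

Lemma core (R : realType) (C : 'I_m.+1 -> {vspace 'rV[F]_n}) (C1' : {vspace 'rV[F]_n})
  (r beta : R) :
  (C1' <= C ord0)%VS -> 0 <= r -> 0 <= beta -> PN r C ->
  (forall t : word F n m, in_boxsum (tail_codes C) t ->
     exists d : 'I_m -> word F n m,
     [/\ forall i, in_dir (tail_codes C) i (d i), t = \sum_i d i &
         (\sum_i Ncnt i (d i))%:R <= beta * (scnt t)%:R]) ->
  PN (r / (1 + beta)) (replace_first C C1').
Proof.
move=> hsub r0 b0 HC HT c [b [hb hc]].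
have cC : in_boxsum C c.
  exists b; split => // i p; case: (unliftP ord0 i) => [i'|] ->.
    by move: (hb (lift ord0 i') p); rewrite rf_lift.
  exact: (subvP hsub _ (hb ord0 p)).
have [a [ha hca hra]] := HC c cC.
set A := (1%:M - lin1_mx (projv C1')) : 'M[F]_n.
set t := Mop A (a ord0).
have t1 : forall p, restr t ord0 p =
    restr (a ord0) ord0 p - projv C1' (restr (a ord0) ord0 p).
  by move=> p; rewrite restr_Mop projA.
have t2 : forall p, restr (a ord0 - t) ord0 p \in C1'.
  by move=> p; rewrite restrB t1 opprB addrC subrK memv_proj.
have t3 : forall p, restr (a ord0) ord0 p = 0 -> restr t ord0 p = 0.
  by move=> p h; rewrite t1 h linear0 subr0.
have t4 : Mop A (b ord0) = 0.
  apply/ffunP => p; rewrite (restr_at _ ord0 p) restr_Mop projA projv_id.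
    by rewrite subrr mxE ffunE.
  exact: (hb ord0 p).
have t5 : t = \sum_(i < m) Mop A (b (lift ord0 i) - a (lift ord0 i)).
  have : a ord0 = b ord0 + \sum_(i < m) (b (lift ord0 i) - a (lift ord0 i)).
    have e := hc; rewrite hca !big_ord_recl in e.
    by rewrite sumrB addrA -e addrK.
  by rewrite /t => ->; rewrite MopD t4 add0r Mop_sum.
have t6 : forall i, in_dir C (lift ord0 i) (Mop A (b (lift ord0 i) - a (lift ord0 i))).
  move=> i; apply: Mop_dir => p; rewrite restrB; apply: memvB; last exact: ha.
  by move: (hb (lift ord0 i) p); rewrite rf_lift.
have HS : forall j, exists d : 'I_m -> word F n m,
    [/\ forall i, in_dir (tail_codes C) i (d i), sl j t = \sum_i d i &
        (\sum_i Ncnt i (d i))%:R <= beta * (scnt (sl j t))%:R].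
  move=> j; apply: HT.
  exists (fun i => sl j (Mop A (b (lift ord0 i) - a (lift ord0 i)))); split.
    by move=> i q; rewrite restr_sl tail_lift; exact: t6.
  by rewrite t5 sl_sum.
case: (choice HS) => d hd.
set dd := fun i : 'I_m => gw (fun j => d j i).
have d1 : forall i, in_dir C (lift ord0 i) (dd i).
  move=> i p; rewrite restr_gw -tail_lift; by case: (hd (p ord0)) => h _ _; apply: h.
have d2 : \sum_i dd i = t.
  apply/ffunP => p; rewrite sum_ffunE.
  transitivity ((\sum_i d (p ord0) i) (tl p)).
    by rewrite sum_ffunE; apply: eq_bigr => i _; rewrite ffunE.
  by case: (hd (p ord0)) => _ <- _; rewrite ffunE glue_tl.
pose e := fun i : 'I_m.+1 =>
  if unlift ord0 i is Some i' then a i + dd i' else a ord0 - t.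
exists e; split.
- move=> i p; case: (unliftP ord0 i) => [i'|] ->; rewrite /e ?liftK ?unlift_none.
    by rewrite rf_lift restrD; apply: memvD; [exact: ha | exact: d1].
  exact: t2.
- rewrite hca !big_ord_recl /e unlift_none.
  under [X in _ = _ + X]eq_bigr do rewrite liftK.
  by rewrite big_split /= d2 [_ + t]addrC addrA subrK.
pose S := (\sum_i Ncnt i (a i))%N.
pose X := (\sum_(i < m) Ncnt (lift ord0 i) (dd i))%N.
have cnt1 : (\sum_i Ncnt i (e i) <= S + X)%N.
  rewrite /S /X !big_ord_recl /e unlift_none.
  under eq_bigr do rewrite liftK.
  rewrite -addnA leq_add //.
    by apply: Ncnt_mono => p h; rewrite restrB h t3 // subr0.
  by rewrite -big_split /=; apply: leq_sum => i _; exact: Ncnt_add.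
have cnt2 : (X%:R : R) <= beta * (Ncnt ord0 (a ord0))%:R.
  have -> : X = (\sum_(j < n) \sum_(i < m) Ncnt i (d j i))%N.
    rewrite exchange_big; apply: eq_bigr => i _; exact: Ncnt_gw.
  rewrite natr_sum; apply: (@le_trans _ _ (\sum_j beta * (scnt (sl j t))%:R)).
    by apply: ler_sum => j _; case: (hd j) => _ _; rewrite natr_sum.
  rewrite -mulr_sumr -natr_sum -scnt_sl; apply: ler_wpM2l => //; rewrite ler_nat.
  apply: leq_trans (scnt_Ncnt ord0 t) _; apply: Ncnt_mono; exact: t3.
have cnt3 : (Ncnt ord0 (a ord0) <= S)%N by rewrite /S big_ord_recl leq_addr.
have h1 : ((\sum_i Ncnt i (e i))%:R : R) <= S%:R + X%:R by rewrite -natrD ler_nat.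
have h2 : (X%:R : R) <= beta * S%:R.
  apply: le_trans cnt2 _; apply: ler_wpM2l => //; by rewrite ler_nat.
set Sn := (\sum_i Ncnt i (e i))%N in h1 *.
set k := r / (1 + beta).
have k0 : 0 <= k by rewrite /k divr_ge0 // addr_ge0.
have hb1 : 0 < 1 + beta by lra.
have hk : r = k * (1 + beta) by rewrite /k divfK // lt0r_neq0.
have p1 : 0 <= k * (S%:R + X%:R - Sn%:R) by apply: mulr_ge0 => //; rewrite subr_ge0.
have p2 : 0 <= k * (beta * S%:R - X%:R) by apply: mulr_ge0 => //; rewrite subr_ge0.
rewrite hk in hra.
move: hra; rewrite /S -/S => hra.
nra.
Qed.
End Core.


Section Rho.
Variables (F : finFieldType) (R : realType) (n E : nat).
Implicit Types (A : 'I_E -> {vspace 'rV[F]_n}).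

Lemma dnorm_ge0 i (x : word F n E) : 0 <= dnorm R i x.
Proof. by rewrite /dnorm divr_ge0 ?ler0n. Qed.
Lemma rnorm_ge0 (x : word F n E) : 0 <= rnorm R x.
Proof. by rewrite /rnorm divr_ge0 ?ler0n. Qed.

Lemma valid_down A (r x : R) : x <= r -> prod_expanding r A -> prod_expanding x A.
Proof.
move=> xr H c /H [a [h1 h2 h3]]; exists a; split => //.
apply: le_trans h3; apply: ler_wpM2r => //; apply: sumr_ge0 => i _; exact: dnorm_ge0.
Qed.

Lemma valid_nonpos A (x : R) : x <= 0 -> prod_expanding x A.
Proof.
move=> x0 c [a [h1 h2]]; exists a; split => //.
apply: le_trans (rnorm_ge0 c); apply: mulr_le0_ge0 => //.
apply: sumr_ge0 => i _; exact: dnorm_ge0.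
Qed.

Lemma rho_lt A (x : R) : (x%:E < rho_pe R A)%E -> prod_expanding x A.
Proof.
move=> /ereal_sup_gt [y [r Hr <-]]; rewrite lte_fin => xr.
exact: valid_down (ltW xr) Hr.
Qed.

Lemma rho_ub A (r : R) : prod_expanding r A -> (r%:E <= rho_pe R A)%E.
Proof. by move=> H; apply: ereal_sup_ubound; exists r. Qed.

Lemma rho_ge0 A : (0 <= rho_pe R A)%E.
Proof. by apply: rho_ub; apply: valid_nonpos. Qed.

Lemma rho_pinfty A : rho_pe R A = +oo%E -> forall r : R, prod_expanding r A.
Proof. by move=> H r; apply: rho_lt; rewrite H ltry. Qed.

Lemma TB_valid A (r : R) : 0 < r -> PN r A ->
  forall t : word F n E, in_boxsum A t -> exists d : 'I_E -> word F n E,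
     [/\ forall i, in_dir A i (d i), t = \sum_i d i &
         (\sum_i Ncnt i (d i))%:R <= r^-1 * (scnt t)%:R].
Proof.
move=> r0 H t /H [d [h1 h2 h3]]; exists d; split => //.
by rewrite -(ler_pM2l r0) mulrA mulfV ?mul1r // gt_eqF.
Qed.

Lemma TB_inf A : (forall r : R, PN r A) ->
  forall t : word F n E, in_boxsum A t -> exists d : 'I_E -> word F n E,
     [/\ forall i, in_dir A i (d i), t = \sum_i d i &
         (\sum_i Ncnt i (d i))%:R <= (0 : R) * (scnt t)%:R].
Proof.
move=> H t /(H (scnt t).+1%:R) [d [h1 h2 h3]]; exists d; split => //.
rewrite -natrM ler_nat in h3; rewrite mul0r.
suff -> : (\sum_i Ncnt i (d i))%N = 0%N by [].
move: h3; set N := (\sum_i _)%N; set s := scnt t => h3.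
case: N h3 => // k; rewrite mulnS; move/(leq_trans (leq_addr _ _)).
by rewrite ltnn.
Qed.
End Rho.

Lemma le_by_approx (R : realType) (G y : \bar R) :
  (forall z : R, 0 < z -> (z%:E < G)%E -> (z%:E <= y)%E) -> (0 <= y)%E -> (G <= y)%E.
Proof.
move=> H y0; case: (leP G y) => // yG; exfalso.
case: y H y0 yG => [y0'| |] H y0 yG //.
  rewrite lee_fin in y0.
  case: G H yG => [g| |] H yG //.
    rewrite lte_fin in yG.
    have : (y0' + g) / 2 <= y0'.
      by rewrite -lee_fin; apply: H; [lra | rewrite lte_fin; lra].
    lra.
  have : y0' + 1 <= y0'.
    by rewrite -lee_fin; apply: H; [lra | exact: ltry].
  lra.
by case: G H yG.
Qed.

End Helpers.
Import Helpers.

Theorem lemma1 (F : finFieldType) (R : realType) (hF : 2%N \in [pchar F])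
  (n D : nat) (hD : (2 <= D)%N) (C : 'I_D -> {vspace 'rV[F]_n})
  (C1' : {vspace 'rV[F]_n}) (i0 : 'I_D) (hi0 : val i0 = 0%N)
  (hsub : (C1' <= C i0)%VS) :
  (rho_pe R (C : 'I_D -> _) / (1 + (rho_pe R (tail_codes C))^-1)
     <= rho_pe R (replace_first C C1'))%E.
Proof.
case: D hD C i0 hi0 hsub => [//|m] hD C i0 hi0 hsub.
have ei0 : i0 = ord0 by apply: val_inj.
rewrite ei0 in hsub.
have V : forall (r beta : R), 0 <= r -> 0 <= beta -> prod_expanding r C ->
   (forall t : word F n m, in_boxsum (tail_codes C) t ->
     exists d : 'I_m -> word F n m,
     [/\ forall i, in_dir (tail_codes C) i (d i), t = \sum_i d i &
         (\sum_i Ncnt i (d i))%:R <= beta * (scnt t)%:R]) ->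
   prod_expanding (r / (1 + beta)) (replace_first C C1').
  move=> r beta r0 b0 Hr HT; apply/PE; apply: core => //; exact/PE.
apply: le_by_approx; last exact: rho_ge0.
move=> z z0.
have rge0 := rho_ge0 R (tail_codes C).
case E' : (rho_pe R (tail_codes C)) rge0 => [m'| |] // m'0; last first.
  rewrite invey adde0 inve1 mule1 => zr.
  have Hz := rho_lt zr.
  have := V z 0 (ltW z0) (lexx 0) Hz (TB_inf (fun r => (PE r _).1 (rho_pinfty E' r))).
  by rewrite addr0 divr1 => H; exact: rho_ub H.
rewrite lee_fin in m'0.
case: (eqVneq m' 0) => [->|m'n0].
  by rewrite inve0 addey // invey mule0 lte_fin => /lt_trans /(_ z0); rewrite ltxx.
have m'p : 0 < m' by rewrite lt_def m'n0.
have key : forall beta r : R, m'^-1 < beta -> 0 <= r -> prod_expanding r C ->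
    ((r / (1 + beta))%:E <= rho_pe R (replace_first C C1'))%E.
  move=> beta r hb r0 Hr.
  have bpos : 0 < beta by apply: lt_trans hb; rewrite invr_gt0.
  have Ht : prod_expanding beta^-1 (tail_codes C).
    apply: rho_lt; rewrite E' lte_fin -[m' in _ < m']invrK ltf_pV2 ?posrE ?invr_gt0 //.
  apply: rho_ub; apply: V => //; first exact: ltW.
  have bi : 0 < beta^-1 by rewrite invr_gt0.
  have := TB_valid bi ((PE _ _).1 Ht).
  by rewrite invrK.
have fin : forall beta, m'^-1 < beta -> prod_expanding (z * (1 + beta)) C ->
    (z%:E <= rho_pe R (replace_first C C1'))%E.
  move=> beta hb H.
  have bpos : 0 < beta by apply: lt_trans hb; rewrite invr_gt0.
  have b1 : 0 < 1 + beta by lra.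
  have := key beta _ hb _ H; rewrite mulfK ?lt0r_neq0 //; apply.
  by rewrite mulr_ge0 // ltW.
have mi : 0 < m'^-1 by rewrite invr_gt0.
rewrite inver (negbTE m'n0).
have k0 : 0 < 1 + m'^-1 by lra.
have -> : (1 + (m'^-1)%:E)%E = (1 + m'^-1)%:E by [].
rewrite inver gt_eqF //.
have rg := rho_ge0 R C.
case Er : (rho_pe R C) rg => [g| |] // _ zG.
  rewrite -EFinM lte_fin ltr_pdivlMr // in zG.
  have dpos : 0 < g - z * (1 + m'^-1) by rewrite subr_gt0.
  apply: (fin (m'^-1 + (g - z * (1 + m'^-1)) / (2 * z))).
    by rewrite ltrDl divr_gt0 // mulr_gt0.
  apply: rho_lt; rewrite Er lte_fin.
  have -> : z * (1 + (m'^-1 + (g - z * (1 + m'^-1)) / (2 * z))) =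
            g - (g - z * (1 + m'^-1)) / 2.
    by field; rewrite m'n0 lt0r_neq0.
  lra.
apply: (fin (m'^-1 + 1)); first lra.
exact: rho_pinfty.
Qed.
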